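(* Every second-order polynomial has a polynomial majorant.
   Context: Second-order polynomials are the smallest class of functions $P\colon\mathbb N^{\mathbb N}\times\mathbb N\to\mathbb N$ that contains all $(l,n)\mapsto p(n)$ for polynomials $p$ with natural-number coefficients, and is closed under pointwise sum, pointwise product, and $P\mapsto P^+$ with $P^+(l,n)=l(P(l,n))$. A polynomial tree is a finite rooted tree in which each node is labeled by a polynomial in $\mathbb N[X_0,\ldots,X_k]$, $k$ being the number of children of that node, with the children of each node linearly ordered. Recursively assign functions to nodes: a leaf labeled $t$ gets $(l,n)\mapsto t(n)$; a node labeled $t$ with children (in order) assigned $P_1,\ldots,P_k$ gets $(l,n)\mapsto t(n,l(P_1(l,n)),\ldots,l(P_k(l,n)))$. The tree is a description of $P$ if $P$ is assigned to the root. A pair $(N,p)$ with $N\in\mathbb N$ and $p\colon\mathbb N\to\mathbb N$ is a majorant of $P$ if $p(n)\ge n$ for all $n$ and there is a description $T$ of $P$ such that $N$ is the height of $T$ and for every $n\in\mathbb N$ and every node $t$ of $T$ (with $k$ children) $p(n)\ge t(n,\ldots,n)$ (all $k+1$ variables set to $n$). It is a polynomial majorant if $p$ is a polynomial. *)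

(* Defs.v *)
From mathcomp Require Import all_boot.
Set Implicit Arguments. Unset Strict Implicit. Unset Printing Implicit Defensive.

(* Syntactic multivariate polynomials with natural-number coefficients.
   Variables are X_0, X_1, ...; [pvar i] is X_i. *)
Inductive pexpr : Type :=
| PConst : nat -> pexpr
| PVar : nat -> pexpr
| PAdd : pexpr -> pexpr -> pexpr
| PMul : pexpr -> pexpr -> pexpr.

Fixpoint peval (v : seq nat) (e : pexpr) : nat :=
  match e with
  | PConst c => c
  | PVar i => nth 0 v i
  | PAdd a b => peval v a + peval v b
  | PMul a b => peval v a * peval v b
  end.

Fixpoint pvars_lt (m : nat) (e : pexpr) : bool :=
  match e with
  | PConst _ => true
  | PVar i => i < m
  | PAdd a b => pvars_lt m a && pvars_lt m b
  | PMul a b => pvars_lt m a && pvars_lt m b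
  end.

Definition is_nat_poly (p : nat -> nat) : Prop :=
  exists e : pexpr, pvars_lt 1 e /\ forall n, p n = peval [:: n] e.

(* Second-order polynomials: the smallest class of functions
   (nat -> nat) -> nat -> nat containing (l,n) |-> p n for polynomials p,
   closed under pointwise sum, product and P |-> P^+ (l,n) = l (P l n).
   (Also closed under extensional equality, i.e. a class of functions.) *)
Inductive second_order_poly : ((nat -> nat) -> nat -> nat) -> Prop :=
| sop_poly (p : nat -> nat) :
    is_nat_poly p -> second_order_poly (fun l n => p n)
| sop_add P Q : second_order_poly P -> second_order_poly Q ->
    second_order_poly (fun l n => P l n + Q l n)
| sop_mul P Q : second_order_poly P -> second_order_poly Q ->
    second_order_poly (fun l n => P l n * Q l n)
| sop_plus P : second_order_poly P ->
    second_order_poly (fun l n => l (P l n))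
| sop_ext P Q : second_order_poly P -> (forall l n, P l n = Q l n) ->
    second_order_poly Q.

Inductive ptree : Type := PNode : pexpr -> seq ptree -> ptree.

Fixpoint ptree_wf (T : ptree) : bool :=
  match T with
  | PNode t cs => pvars_lt (size cs).+1 t && all ptree_wf cs
  end.

Fixpoint ptree_fun (T : ptree) (l : nat -> nat) (n : nat) : nat :=
  match T with
  | PNode t cs => peval (n :: map (fun c => l (ptree_fun c l n)) cs) t
  end.

Fixpoint ptree_height (T : ptree) : nat :=
  match T with
  | PNode _ cs => if cs is [::] then 0 else (foldr maxn 0 (map ptree_height cs)).+1
  end.

Fixpoint ptree_all_nodes (Q : pexpr -> nat -> Prop) (T : ptree) : Prop :=
  match T with
  | PNode t cs => Q t (size cs) /\ foldr (fun c acc => ptree_all_nodes Q c /\ acc) True cs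
  end.

Definition is_description (T : ptree) (P : (nat -> nat) -> nat -> nat) : Prop :=
  ptree_wf T /\ forall l n, ptree_fun T l n = P l n.

Definition majorant (N : nat) (p : nat -> nat) (P : (nat -> nat) -> nat -> nat) : Prop :=
  (forall n, n <= p n) /\
  exists T : ptree, is_description T P /\ ptree_height T = N /\
    forall n, ptree_all_nodes (fun t k => peval (nseq k.+1 n) t <= p n) T.

Definition polynomial_majorant (N : nat) (p : nat -> nat) P : Prop :=
  majorant N p P /\ is_nat_poly p.

(* Main.v *)
Require Import Defs.
From mathcomp Require Import all_boot.

Definition ptree_ind' (Q : ptree -> Prop)
  (H : forall t cs, foldr (fun c acc => Q c /\ acc) True cs -> Q (PNode t cs)) :
  forall T, Q T :=
  fix F T := match T with PNode t cs => H t cs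
    ((fix G (cs : seq ptree) : foldr (fun c acc => Q c /\ acc) True cs :=
       match cs with [::] => I | c :: cs' => conj (F c) (G cs') end) cs) end.

Fixpoint pdiag (e : pexpr) : pexpr :=
  match e with
  | PConst c => PConst c
  | PVar _ => PVar 0
  | PAdd a b => PAdd (pdiag a) (pdiag b)
  | PMul a b => PMul (pdiag a) (pdiag b)
  end.

Fixpoint tbound (T : ptree) : pexpr :=
  match T with PNode t cs =>
    PAdd (pdiag t) ((fix G (cs : seq ptree) := match cs with
        [::] => PConst 0 | c :: cs' => PAdd (tbound c) (G cs') end) cs) end.

Lemma pdiag_le m n t : peval (nseq m n) t <= peval [:: n] (pdiag t).
Proof.
elim: t => [c|i|a IHa b IHb|a IHa b IHb] //=.
- rewrite nth_nseq; by case: ifP.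
- exact: leq_add.
- exact: leq_mul.
Qed.

Lemma pdiag_vars t : pvars_lt 1 (pdiag t).
Proof. by elim: t => //= a -> b ->. Qed.

Lemma tbound_vars T : pvars_lt 1 (tbound T).
Proof.
elim/ptree_ind': T => t cs H /=; rewrite pdiag_vars /=.
by elim: cs H => //= c cs IH [-> /IH ->].
Qed.

Lemma tbound_ok T n B : peval [:: n] (tbound T) <= B ->
  ptree_all_nodes (fun t k => peval (nseq k.+1 n) t <= B) T.
Proof.
elim/ptree_ind': T B => t cs H B /= HB; split.
  apply: leq_trans (pdiag_le (size cs).+1 n t) _; apply: leq_trans HB; exact: leq_addr.
have {}HB := leq_trans (leq_addl _ _) HB.
elim: cs H HB => //= c cs IH [Hc Hcs] HB; split.
  by apply: Hc; apply: leq_trans HB; apply: leq_addr.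
by apply: IH => //; apply: leq_trans HB; apply: leq_addl.
Qed.

Fixpoint shift (s : nat) (e : pexpr) : pexpr :=
  match e with
  | PConst c => PConst c
  | PVar i => if i == 0 then PVar 0 else PVar (i + s)
  | PAdd a b => PAdd (shift s a) (shift s b)
  | PMul a b => PMul (shift s a) (shift s b)
  end.

Lemma shift_eval n a b e : peval (n :: a ++ b) (shift (size a) e) = peval (n :: b) e.
Proof.
elim: e => [c|i|x IHx y IHy|x IHx y IHy] //=; try by rewrite IHx IHy.
case: i => //= i; rewrite nth_cat ifF; last by rewrite ltnNge leq_addl.
by rewrite addnK.
Qed.

Lemma shift_vars s k e : pvars_lt k.+1 e -> pvars_lt (s + k).+1 (shift s e).
Proof.
elim: e => [c|i|x IHx y IHy|x IHx y IHy] //=; try by move/andP=> [/IHx -> /IHy ->].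
case: i => //= i Hi; rewrite addSn ltnS addnC ltn_add2l; exact: Hi.
Qed.

Lemma vars_mono m m' e : m <= m' -> pvars_lt m e -> pvars_lt m' e.
Proof.
move=> Hm; elim: e => [c|i|x IHx y IHy|x IHx y IHy] //=;
  try by move/andP=> [/IHx -> /IHy ->].
by move=> Hi; apply: leq_trans Hm.
Qed.

Lemma eval_cat v w e : pvars_lt (size v) e -> peval (v ++ w) e = peval v e.
Proof.
elim: e => [c|i|x IHx y IHy|x IHx y IHy] //=;
  try by move/andP=> [/IHx -> /IHy ->].
by move=> Hi; rewrite nth_cat Hi.
Qed.

Definition combine (op : pexpr -> pexpr -> pexpr) (T1 T2 : ptree) : ptree :=
  match T1, T2 with PNode t1 cs1, PNode t2 cs2 =>
    PNode (op t1 (shift (size cs1) t2)) (cs1 ++ cs2) end.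

Lemma combine_ok (op : pexpr -> pexpr -> pexpr) (f : nat -> nat -> nat) T1 T2 P1 P2 :
  (forall v a b, peval v (op a b) = f (peval v a) (peval v b)) ->
  (forall m a b, pvars_lt m (op a b) = pvars_lt m a && pvars_lt m b) ->
  is_description T1 P1 -> is_description T2 P2 ->
  is_description (combine op T1 T2) (fun l n => f (P1 l n) (P2 l n)).
Proof.
move=> Hev Hvar; case: T1 => t1 cs1; case: T2 => t2 cs2.
move=> [/= /andP [w1 a1] E1] [/= /andP [w2 a2] E2]; split.
  rewrite /= Hvar all_cat a1 a2 size_cat andbT shift_vars // andbT.
  by rewrite andbT; move: w1; apply: vars_mono; rewrite ltnS leq_addr.
move=> l n /=; rewrite Hev map_cat -E1 -E2 /=.
rewrite -cat_cons eval_cat; last by rewrite /= size_map.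
by rewrite -(size_map (fun c => l (ptree_fun c l n)) cs1) shift_eval.
Qed.

Lemma has_desc P : second_order_poly P -> exists T, is_description T P.
Proof.
elim=> {P}.
- move=> p [e [He Ep]]; exists (PNode e [::]); split; first by rewrite /= He.
  by move=> l n /=; rewrite Ep.
- move=> P Q _ [T1 H1] _ [T2 H2]; exists (combine PAdd T1 T2).
  by apply: (@combine_ok PAdd addn).
- move=> P Q _ [T1 H1] _ [T2 H2]; exists (combine PMul T1 T2).
  by apply: (@combine_ok PMul muln).
- move=> P _ [T [w E]]; exists (PNode (PVar 1) [:: T]); split => /=.
    by rewrite w.
  by move=> l n; rewrite E.
- move=> P Q _ [T [w E]] HQ; exists T; split => // l n; by rewrite E HQ.
Qed.

Theorem mainTheorem4 (P : (nat -> nat) -> nat -> nat) :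
  second_order_poly P -> exists (N : nat) (p : nat -> nat), polynomial_majorant N p P.
Proof.
move=> /has_desc [T HT].
exists (ptree_height T), (fun n => n + peval [:: n] (tbound T)); split.
  split; first by move=> n; apply: leq_addr.
  exists T; split => //; split => // n; apply: tbound_ok; apply: leq_addl.
exists (PAdd (PVar 0) (tbound T)); split => //=.
by rewrite tbound_vars.
Qed.
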